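(* Let $d,k$ be integers with $2 \leq d \leq \frac{k+1}{2}$, let $\Sigma_k=\{\sigma_1,\ldots,\sigma_k\}$ and $\Sigma_d=\{\sigma_1,\ldots,\sigma_d\}$. Consider two users over the alphabet $\Sigma_k$, where user 1 has confusion graph $G_1=(\Sigma_k,\{ab \mid a\in\Sigma_k,\ b\in\Sigma_k\setminus\Sigma_d,\ a\neq b\})$ and user 2 has the complement confusion graph $G_2=\overline{G_1}=(\Sigma_k,\{ab\mid a,b\in\Sigma_d,\ a\neq b\})$. Then for every $\alpha\in[0,1]$ the rate vector $(\alpha\log_2 d,\ (1-\alpha)\log_2(k-d+1))$ is optimal.
   Context: Setting: a sender broadcasts a word of length $n$ over a finite alphabet $\Sigma$ to $r$ users; user $i$ has a confusion graph $G_i$ on vertex set $\Sigma$, where $ab$ is an edge iff user $i$ cannot distinguish letters $a$ and $b$. Two words $x,y\in\Sigma^n$ are distinguishable by user $i$ if there is a coordinate $t$ with $x_t\neq y_t$ and $x_ty_t$ not an edge of $G_i$. A vector $(m_1,\ldots,m_r)$ of positive integers is feasible for length $n$ if there is a map $E:[m_1]\times\cdots\times[m_r]\to\Sigma^n$ such that for every $i$ and all tuples $a,a'$ with $a_i\neq a'_i$, the words $E(a)$ and $E(a')$ are distinguishable by user $i$. A rate vector $(R_1,\ldots,R_r)$ is feasible if there is a sequence of feasible vectors $(m_1^{(n)},\ldots,m_r^{(n)})$ for lengths $n\to\infty$ with $R_i=\lim_{n\to\infty}\frac{\log_2 m_i^{(n)}}{n}$ for all $i$. For two users, a rate vector is optimal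 if it is feasible and no user can increase his rate while the other user keeps the same rate. *)

(* Defs.v *)
From mathcomp Require Import all_boot.
From Stdlib Require Import Reals.

Set Implicit Arguments.
Unset Strict Implicit.
Unset Printing Implicit Defensive.

Definition word (Sigma : finType) (n : nat) := 'I_n -> Sigma.

Definition distinguishable (Sigma : finType) (G : rel Sigma) (n : nat)
  (x y : word Sigma n) : Prop :=
  exists t : 'I_n, x t != y t /\ ~~ G (x t) (y t).

Definition feasible_vec (Sigma : finType) (G1 G2 : rel Sigma) (n m1 m2 : nat)
  : Prop :=
  (0 < m1)%N /\ (0 < m2)%N /\
  exists E : 'I_m1 -> 'I_m2 -> word Sigma n,
    forall (a1 a1' : 'I_m1) (a2 a2' : 'I_m2),
      (a1 <> a1' -> distinguishable G1 (E a1 a2) (E a1' a2')) /\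
      (a2 <> a2' -> distinguishable G2 (E a1 a2) (E a1' a2')).

Definition log2 (x : R) : R := (ln x / ln 2)%R.

Definition feasible_rate (Sigma : finType) (G1 G2 : rel Sigma) (R1 R2 : R)
  : Prop :=
  exists m1 m2 : nat -> nat,
    (forall n, feasible_vec G1 G2 n (m1 n) (m2 n)) /\
    Un_cv (fun n => (log2 (INR (m1 n)) / INR n)%R) R1 /\
    Un_cv (fun n => (log2 (INR (m2 n)) / INR n)%R) R2.

Definition optimal_rate (Sigma : finType) (G1 G2 : rel Sigma) (R1 R2 : R)
  : Prop :=
  feasible_rate G1 G2 R1 R2 /\
  (forall R1', (R1 < R1')%R -> ~ feasible_rate G1 G2 R1' R2) /\
  (forall R2', (R2 < R2')%R -> ~ feasible_rate G1 G2 R1 R2').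

(* Alphabet Sigma_k = 'I_k (sigma_{i+1} <-> i), Sigma_d = {i | i < d}. *)
Definition G1_graph (k d : nat) : rel 'I_k :=
  fun a b => (a != b) && ((d <= a)%N || (d <= b)%N).
Definition G2_graph (k d : nat) : rel 'I_k :=
  fun a b => (a != b) && (a < d)%N && (b < d)%N.
Arguments G1_graph : clear implicits.
Arguments G2_graph : clear implicits.

(* Main.v *)
Require Import Defs.
From mathcomp Require Import all_boot.
From mathcomp Require Import zify.
From Stdlib Require Import Reals Lra Lia.
From Stdlib Require ZArith.

Module MReal1.
Local Open Scope R_scope.

Lemma Rpower1_base y : Rpower 1 y = 1.
Proof. by rewrite /Rpower ln_1 Rmult_0_r exp_0. Qed.

Lemma Rpower_pos x y : 0 < Rpower x y.
Proof. exact: exp_pos. Qed.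

Lemma Rpower_le_self r b : 1 <= b -> 0 < r <= 1 -> Rpower r b <= r.
Proof.
move=> hb hr.
have -> : b = 1 + (b - 1) by ring.
rewrite Rpower_plus Rpower_1; last lra.
have h : Rpower r (b-1) <= 1.
  apply: Rle_trans (_ : Rpower 1 (b-1) <= 1); last by rewrite Rpower1_base; lra.
  apply: Rle_Rpower_l; lra.
have := Rpower_pos r (b-1). nra.
Qed.

Lemma superadd b x y : 1 <= b -> 0 < x -> 0 < y ->
  Rpower x b + Rpower y b <= Rpower (x + y) b.
Proof.
move=> hb hx hy.
have hs : 0 < x + y by lra.
have ex : x = (x / (x+y)) * (x+y) by field; lra.
have ey : y = (y / (x+y)) * (x+y) by field; lra.
have hx1 : 0 < x / (x+y) <= 1.
  split; first by apply: Rdiv_lt_0_compat.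
  apply: (Rmult_le_reg_r (x+y)) => //; rewrite -ex; lra.
have hy1 : 0 < y / (x+y) <= 1.
  split; first by apply: Rdiv_lt_0_compat.
  apply: (Rmult_le_reg_r (x+y)) => //; rewrite -ey; lra.
have -> : Rpower x b = Rpower (x/(x+y)) b * Rpower (x+y) b.
  rewrite Rpower_mult_distr; try lra; by rewrite -ex.
have -> : Rpower y b = Rpower (y/(x+y)) b * Rpower (x+y) b.
  rewrite Rpower_mult_distr; try lra; by rewrite -ey.
have h1 := Rpower_le_self (x/(x+y)) b hb hx1. have h2 := Rpower_le_self (y/(x+y)) b hb hy1.
have hp := Rpower_pos (x+y) b.
have : Rpower (x / (x + y)) b + Rpower (y / (x + y)) b <= 1.
  apply: Rle_trans (_ : x/(x+y) + y/(x+y) <= 1); first lra.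
  right; field; lra.
nra.
Qed.

Lemma L1 b a c x : 1 <= b -> 0 < c <= a -> 0 <= x ->
  Rpower a b - Rpower c b <= Rpower (a + x) b - Rpower (c + x) b.
Proof.
move=> hb hca hx.
case: (Req_dec a c) => [->|hne]; first lra.
have hlt : c < a by lra.
pose f t := Rpower (t + x) b - Rpower t b.
pose f' t := b * Rpower (t + x) (b - 1) - b * Rpower t (b - 1).
have hd : forall t, c <= t <= a -> derivable_pt_lim f t (f' t).
  move=> t ht; rewrite /f /f'.
  apply: derivable_pt_lim_minus; last by apply: derivable_pt_lim_power; lra.
  have -> : b * Rpower (t + x) (b - 1) = b * Rpower (t + x) (b - 1) * 1 by ring.
  apply: (derivable_pt_lim_comp (fun t => t + x) (Rpower^~ b)).
    have -> : 1 = 1 + 0 by ring.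
    apply: derivable_pt_lim_plus; [exact: derivable_pt_lim_id | exact: derivable_pt_lim_const].
  apply: derivable_pt_lim_power; lra.
have [t [ht1 ht2]] := MVT_cor2 f f' c a hlt hd.
have : 0 <= f' t.
  rewrite /f'. have : Rpower t (b-1) <= Rpower (t + x) (b-1).
    apply: Rle_Rpower_l; lra.
  nra.
rewrite /f in ht1. nra.
Qed.

End MReal1.
Import MReal1.

Module MReal2.
Local Open Scope R_scope.

Definition gR (b : R) (m : nat) : R := if m is 0%nat then 0 else Rpower (INR m) b.
Definition gsumR b (s : seq nat) := foldr (fun u acc => gR b u + acc) 0 s.

Lemma INR_pos (m : nat) : (0 < m)%nat -> 0 < INR m.
Proof. by case: m => // m _; apply: lt_0_INR; apply/ltP. Qed.

Lemma INR_addn (m n : nat) : INR (m + n) = INR m + INR n.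
Proof. by rewrite -plus_INR plusE. Qed.

Lemma gR_pos b (m : nat) : (0 < m)%nat -> gR b m = Rpower (INR m) b.
Proof. by case: m. Qed.

Lemma g_super b (m1 m2 : nat) : 1 <= b -> gR b m1 + gR b m2 <= gR b (m1 + m2).
Proof.
move=> hb; case: m1 => [|m1]; first by rewrite /= Rplus_0_l add0n; lra.
case: m2 => [|m2]; first by rewrite addn0 /=; lra.
rewrite !gR_pos // ?addnS // -addnS INR_addn; apply: superadd => //; exact: INR_pos.
Qed.

Lemma gsum_super b (s : seq nat) : 1 <= b -> gsumR b s <= gR b (sumn s).
Proof.
move=> hb; elim: s => [|u s IH] /=; first lra.
apply: Rle_trans (g_super b u (sumn s) hb); lra.
Qed.

Lemma g_list b (v : nat) (s : seq nat) (S0 : nat) : 1 <= b -> (0 < v)%nat -> all (fun u => v <= u)%nat s ->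
  gR b (S0 + size s * v) - INR (size s) * gR b v <= gR b (S0 + sumn s) - gsumR b s.
Proof.
move=> hb hv; elim: s S0 => [|u s IH] S0.
  rewrite /= mul0n addn0 /=; lra.
rewrite [all _ _]/= => /andP [hu hall].
have := IH (S0 + u)%nat hall.
pose P := (S0 + size s * v)%nat.
have hu0 : (0 < u)%nat by apply: leq_trans hu.
have key : gR b (P + v) - gR b v <= gR b (P + u) - gR b u.
  rewrite (gR_pos b (P + v)); last by rewrite addn_gt0 hv orbT.
  rewrite (gR_pos b (P + u)); last by rewrite addn_gt0 hu0 orbT.
  rewrite (gR_pos b v) // (gR_pos b u) //.
  have hL := L1 b (INR u) (INR v) (INR P) hb.
  rewrite (INR_addn P v) (INR_addn P u) (Rplus_comm (INR P) (INR v)) (Rplus_comm (INR P) (INR u)).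
  suff : Rpower (INR u) b - Rpower (INR v) b <=
    Rpower (INR u + INR P) b - Rpower (INR v + INR P) b by lra.
  apply: hL; last exact: pos_INR.
  split; first exact: INR_pos. by apply: le_INR; apply/leP.
have e2 : (S0 + (size (u :: s)) * v = P + v)%nat.
  by rewrite /P /= mulSn [(v + _)%nat]addnC addnA.
have e3 : (S0 + u + size s * v = P + u)%nat by rewrite /P addnAC.
have e1 : (S0 + u + sumn s = S0 + sumn (u :: s))%nat by rewrite /= addnA.
rewrite e3 e1 e2 => h.
have -> : INR (size (u :: s)) = INR (size s) + 1 by rewrite -S_INR.
have -> : gsumR b (u :: s) = gR b u + gsumR b s by [].
lra.
Qed.

Lemma INR_muln (m n : nat) : INR (m * n) = INR m * INR n.
Proof. by rewrite -mult_INR multE. Qed.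

Lemma INR_subn (m n : nat) : (n <= m)%nat -> INR (m - n) = INR m - INR n.
Proof. move=> h; rewrite -minus_INR ?minusE //; exact/leP. Qed.

Lemma gsum_key b (d D : nat) (v : nat) (s : seq nat) : 1 <= b ->
  Rpower (INR d) b = INR D -> (0 < d)%nat -> (d <= D)%nat -> size s = d ->
  all (fun u => v <= u)%nat s ->
  gsumR b s + INR (D - d) * gR b v <= gR b (sumn s).
Proof.
move=> hb hD hd hdD hs hall.
case: v hall => [|v] hall.
  rewrite /= Rmult_0_r Rplus_0_r; exact: gsum_super.
have := g_list b v.+1 s 0 hb isT hall.
rewrite !add0n hs.
rewrite (gR_pos b (d * v.+1)); last by rewrite muln_gt0 hd.
rewrite INR_muln -Rpower_mult_distr; [|exact: INR_pos|exact: INR_pos].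
rewrite hD INR_subn // (gR_pos b v.+1) //.
lra.
Qed.

End MReal2.
Import MReal2.

Module MComb1.

#[local] Set Implicit Arguments.
#[local] Unset Strict Implicit.
#[local] Unset Printing Implicit Defensive.

Section FF.
Variable T : Type.
Definition fcons n (a : T) (f : {ffun 'I_n -> T}) : {ffun 'I_n.+1 -> T} :=
  [ffun t => if unlift ord0 t is Some t' then f t' else a].
Definition ftail n (f : {ffun 'I_n.+1 -> T}) : {ffun 'I_n -> T} :=
  [ffun t => f (lift ord0 t)].

Lemma fcons0 n a (f : {ffun 'I_n -> T}) : fcons a f ord0 = a.
Proof. by rewrite ffunE unlift_none. Qed.
Lemma fconsS n a (f : {ffun 'I_n -> T}) t : fcons a f (lift ord0 t) = f t.
Proof. by rewrite ffunE liftK. Qed.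
Lemma ftail_fcons n a (f : {ffun 'I_n -> T}) : ftail (fcons a f) = f.
Proof. by apply/ffunP => t; rewrite ffunE fconsS. Qed.
Lemma ftailE n (f : {ffun 'I_n.+1 -> T}) t : ftail f t = f (lift ord0 t).
Proof. by rewrite ffunE. Qed.
Lemma fcons_ftail n (f : {ffun 'I_n.+1 -> T}) : fcons (f ord0) (ftail f) = f.
Proof.
apply/ffunP => t; case: (unliftP ord0 t) => [t'|] ->; first by rewrite fconsS ftailE.
by rewrite fcons0.
Qed.
End FF.

Lemma card_split (A : finType) n (U : {set {ffun 'I_n.+1 -> A}}) :
  #|U| = \sum_(c : A) #|[set z' | fcons c z' \in U]|.
Proof.
rewrite -sum1_card big_mkcond /=.
rewrite (reindex (fun p : A * {ffun 'I_n -> A} => fcons p.1 p.2)) /=; last first.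
  exists (fun z : {ffun 'I_n.+1 -> A} => (z ord0, ftail z)) => [[a f] _|z _] /=.
    by rewrite fcons0 ftail_fcons.
  by rewrite fcons_ftail.
rewrite -(pair_big xpredT xpredT (fun a f => if fcons a f \in U then 1 else 0)) /=.
apply: congr_big => // c _; rewrite -sum1_card [RHS]big_mkcond /=.
by apply: eq_bigr => z _; rewrite inE.
Qed.

Lemma card_sumb (T : finType) (A : {pred T}) : #|A| = \sum_x ((x \in A) : nat).
Proof. by rewrite -sum1_card big_mkcond /=; apply: eq_bigr => x _; case: (x \in A). Qed.

Lemma union_inter (I T : finType) (A : I -> {set T}) :
  #|\bigcup_i A i| + (#|I| - 1) * #|\bigcap_i A i| <= \sum_i #|A i|.
Proof.
rewrite (eq_bigr (fun i => \sum_x ((x \in A i) : nat))); last by move=> i _; rewrite card_sumb.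
rewrite exchange_big /= (card_sumb (\bigcup_i A i)) (card_sumb (\bigcap_i A i)) big_distrr /= -big_split /=.
apply: leq_sum => x _.
have hcnt : \sum_i ((x \in A i) : nat) = #|[set i | x \in A i]|.
  by rewrite card_sumb; apply: eq_bigr => i _; rewrite inE.
rewrite hcnt.
case: (boolP (x \in \bigcap_i A i)) => hI.
  have -> : [set i | x \in A i] = setT.
    by apply/setP => i; rewrite !inE; move/bigcapP: hI => /(_ i isT).
  rewrite cardsT muln1.
  case: (boolP (x \in \bigcup_i A i)) => hU.
    move/bigcupP: hU => [i _ _].
    have hI0 : 0 < #|I| by apply/card_gt0P; exists i.
    by rewrite subn1 add1n prednK.
  by rewrite add0n leq_subr.
rewrite /= muln0 addn0.
case: (boolP (x \in \bigcup_i A i)) => // /bigcupP [i _ hi].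
by rewrite card_gt0; apply/set0Pn; exists i; rewrite inE.
Qed.

End MComb1.
Import MComb1.

Module MComb2.
#[local] Set Implicit Arguments.
#[local] Unset Strict Implicit.
#[local] Unset Printing Implicit Defensive.

Section Pat.
Variables k d : nat.

Definition agree n (x : {ffun 'I_n -> 'I_k}) (z : {ffun 'I_n -> 'I_d}) : bool :=
  [forall t, (x t < d) ==> (val (z t) == val (x t))].
Definition cylsub n (x : {ffun 'I_n -> 'I_k}) (U : {set {ffun 'I_n -> 'I_d}}) :=
  [forall z, agree x z ==> (z \in U)].
Definition pat n (x : {ffun 'I_n -> 'I_k}) : {ffun 'I_n -> option 'I_k} :=
  [ffun t => if x t < d then None else Some (x t)].
Definition Pat n (U : {set {ffun 'I_n -> 'I_d}}) :=
  [set p | [exists x, (pat x == p) && cylsub x U]].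

Lemma PatP n (U : {set {ffun 'I_n -> 'I_d}}) p :
  reflect (exists x, pat x = p /\ cylsub x U) (p \in Pat U).
Proof.
rewrite inE; apply: (iffP existsP) => [[x /andP [/eqP h1 h2]]|[x [h1 h2]]]; exists x => //.
by rewrite h1 eqxx h2.
Qed.

Lemma Pat_mono n (U V : {set {ffun 'I_n -> 'I_d}}) : U \subset V -> Pat U \subset Pat V.
Proof.
move=> hUV; apply/subsetP => p /PatP [x [hx hc]]; apply/PatP; exists x; split => //.
apply/forallP => z; apply/implyP => hz; apply: (subsetP hUV).
by move/forallP: hc => /(_ z) /implyP; apply.
Qed.

Definition Uc n (U : {set {ffun 'I_n.+1 -> 'I_d}}) (c : 'I_d) := [set z' | fcons c z' \in U].
Definition Ic n (U : {set {ffun 'I_n.+1 -> 'I_d}}) := \bigcap_(c : 'I_d) Uc U c.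

Lemma ftail_pat n (x : {ffun 'I_n.+1 -> 'I_k}) : ftail (pat x) = pat (ftail x).
Proof. by apply/ffunP => t; rewrite !ffunE. Qed.

Lemma agree_fcons n (x : {ffun 'I_n.+1 -> 'I_k}) (c : 'I_d) z' :
  (x ord0 < d -> val c = val (x ord0)) -> agree (ftail x) z' -> agree x (fcons c z').
Proof.
move=> h0 /forallP hz; apply/forallP => t; apply/implyP.
case: (unliftP ord0 t) => [t'|] ->.
  rewrite fconsS => ht; move/implyP: (hz t'); rewrite ftailE; exact.
by rewrite fcons0 => /h0 ->.
Qed.

Definition P0 n (U : {set {ffun 'I_n.+1 -> 'I_d}}) :=
  [set p : {ffun 'I_n.+1 -> option 'I_k} | (p ord0 == None) && (ftail p \in \bigcup_(c : 'I_d) Pat (Uc U c))].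
Definition P1 n (U : {set {ffun 'I_n.+1 -> 'I_d}}) :=
  [set p : {ffun 'I_n.+1 -> option 'I_k} | [exists e : 'I_k, (d <= e) && (p ord0 == Some e)] && (ftail p \in Pat (Ic U))].

Lemma Pat_split n (U : {set {ffun 'I_n.+1 -> 'I_d}}) : Pat U \subset P0 U :|: P1 U.
Proof.
apply/subsetP => p /PatP [x [<- hc]]; rewrite !inE ftail_pat.
case: (ltnP (x ord0) d) => hx.
  rewrite ffunE hx eqxx /=; apply/orP; left.
  apply/bigcupP; exists (Ordinal hx) => //; apply/PatP; exists (ftail x); split => //.
  apply/forallP => z'; apply/implyP => hz; rewrite inE.
  by move/forallP: hc => /(_ (fcons (Ordinal hx) z')) /implyP; apply; apply: agree_fcons.
apply/orP; right; apply/andP; split.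
  by apply/existsP; exists (x ord0); rewrite hx ffunE ltnNge hx /=.
apply/existsP; exists (ftail x); rewrite eqxx /=.
apply/forallP => z'; apply/implyP => hz; apply/bigcapP => c _; rewrite inE.
move/forallP: hc => /(_ (fcons c z')) /implyP; apply; apply: agree_fcons => // h.
by move: hx; rewrite leqNgt h.
Qed.

Lemma card_P0 n (U : {set {ffun 'I_n.+1 -> 'I_d}}) :
  #|P0 U| <= #|\bigcup_(c : 'I_d) Pat (Uc U c)|.
Proof.
rewrite -(card_in_imset (f := @ftail _ n)); last first.
  move=> p q; rewrite !inE => /andP [/eqP hp _] /andP [/eqP hq _] he.
  by rewrite -(fcons_ftail p) -(fcons_ftail q) hp hq he.
apply: subset_leq_card; apply/subsetP => y /imsetP [p]; rewrite inE => /andP [_ h] ->.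
exact: h.
Qed.

Lemma card_P1 n (U : {set {ffun 'I_n.+1 -> 'I_d}}) :
  #|P1 U| <= #|[set e : 'I_k | d <= e]| * #|Pat (Ic U)|.
Proof.
rewrite -cardsX.
apply: leq_trans (leq_imset_card (fun pr : 'I_k * {ffun 'I_n -> option 'I_k} => fcons (Some pr.1) pr.2) _).
apply: subset_leq_card; apply/subsetP => p; rewrite inE => /andP [/existsP [e /andP [he /eqP h0]] ht].
apply/imsetP; exists (e, ftail p); first by rewrite in_setX /= ht andbT inE.
by rewrite /= -h0 fcons_ftail.
Qed.

End Pat.

Lemma card_ge (k d : nat) : d <= k -> #|[set e : 'I_k | d <= e]| <= k - d.
Proof.
move=> hdk.
have hC : ~: [set e : 'I_k | d <= e] = [set e : 'I_k | e < d].
  by apply/setP => e; rewrite !inE ltnNge.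
have := cardsC [set e : 'I_k | d <= e]; rewrite hC card_ord => hsum.
have hl : d <= #|[set e : 'I_k | e < d]|.
  rewrite -{1}(card_ord d) -(card_imset _ (_ : injective (widen_ord hdk))).
  apply: subset_leq_card; apply/subsetP => e /imsetP [i _ ->]; rewrite inE /=.
  exact: ltn_ord.
  by move=> i j /(congr1 val) /= /val_inj.
lia.
Qed.

Section Step.
Variables k d : nat.
Lemma Pat_step n (U : {set {ffun 'I_n.+1 -> 'I_d}}) : 0 < d -> d <= k ->
  #|Pat k U| + (d-1) * #|Pat k (Ic U)| <= \sum_(c : 'I_d) #|Pat k (Uc U c)| + (k-d) * #|Pat k (Ic U)|.
Proof.
move=> hd hdk.
have h1 : #|Pat k U| <= #|P0 k U| + #|P1 k U|.
  apply: leq_trans (subset_leq_card (Pat_split k U)) _; exact: leq_card_setU.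
have h2 := card_P0 k U.
have h3 := card_P1 k U.
have h4 := card_ge hdk.
have h5 := union_inter (fun c : 'I_d => Pat k (Uc U c)).
rewrite card_ord in h5.
have h6 : #|Pat k (Ic U)| <= #|\bigcap_(c : 'I_d) Pat k (Uc U c)|.
  apply: subset_leq_card; apply/bigcapsP => c _; apply: Pat_mono; exact: bigcap_inf.
have h7 : (d-1) * #|Pat k (Ic U)| <= (d-1) * #|\bigcap_(c : 'I_d) Pat k (Uc U c)| by apply: leq_mul.
have h8 : #|[set e : 'I_k | d <= e]| * #|Pat k (Ic U)| <= (k-d) * #|Pat k (Ic U)| by apply: leq_mul.
have hA : #|Pat k U| <= #|\bigcup_(c : 'I_d) Pat k (Uc U c)| + (k-d) * #|Pat k (Ic U)| by lia.
have hB : #|Pat k U| + (d-1) * #|Pat k (Ic U)| <= #|\bigcup_(c : 'I_d) Pat k (Uc U c)| + (d-1) * #|\bigcap_(c : 'I_d) Pat k (Uc U c)| + (k-d) * #|Pat k (Ic U)| by lia.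
apply: leq_trans hB _. rewrite leq_add2r. exact: h5.
Qed.
End Step.

End MComb2.
Import MComb2.

Module MLemB.
#[local] Set Implicit Arguments.
#[local] Unset Strict Implicit.
#[local] Unset Printing Implicit Defensive.

Lemma sum_enum d (f : 'I_d -> nat) : \sum_(c : 'I_d) f c = sumn (map f (enum 'I_d)).
Proof. by rewrite sumnE big_map big_enum. Qed.

Lemma INR_sum_le b (T : eqType) (r : seq T) (a h : T -> nat) :
  (forall c, c \in r -> (INR (a c) <= gR b (h c))%R) ->
  (INR (\sum_(c <- r) a c) <= gsumR b (map h r))%R.
Proof.
elim: r => [|c r IH] hr; first by rewrite big_nil /=; lra.
rewrite big_cons INR_addn /=.
have := hr c (mem_head _ _).
have hr' : forall c', c' \in r -> (INR (a c') <= gR b (h c'))%R.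
  by move=> c' hc'; apply: hr; rewrite inE hc' orbT.
have := IH hr'. lra.
Qed.

Lemma lemB b k d : (1 <= b)%R -> Rpower (INR d) b = INR (k - d + 1) -> 0 < d -> 2 * d <= k + 1 ->
  forall n (U : {set {ffun 'I_n -> 'I_d}}), (INR #|Pat k U| <= gR b #|U|)%R.
Proof.
move=> hb hD hd hdk; elim => [|n IH] U.
  have hU1 : #|U| <= 1.
    apply: leq_trans (max_card _) _; by rewrite card_ffun !card_ord.
  have hPU : #|Pat k U| <= #|U|.
    case: (set_0Vmem U) => [->|[z hz]]; last first.
      have h1 : 0 < #|U| by apply/card_gt0P; exists z.
      have h2 : #|Pat k U| <= 1.
        apply: leq_trans (max_card _) _; by rewrite card_ffun !card_ord.
      lia.
    rewrite cards0 leqn0 cards_eq0 -subset0; apply/subsetP => p /PatP [x [_ /forallP /(_ [ffun _ => Ordinal hd])]].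
    have -> : agree x [ffun _ => Ordinal hd] by apply/forallP => -[].
    by rewrite inE.
  have := le_INR _ _ (leP hPU).
  by case: #|U| hU1 => [|[|]] //= _; rewrite ?Rpower1_base.
have hdk' : d <= k by lia.
have hs := Pat_step U hd hdk'.
have hs' : #|Pat k U| <= \sum_(c : 'I_d) #|Pat k (Uc U c)| + (k - d + 1 - d) * #|Pat k (Ic U)|.
  have e : (k - d) * #|Pat k (Ic U)| = (d-1) * #|Pat k (Ic U)| + (k-d+1-d) * #|Pat k (Ic U)|.
    by rewrite -mulnDl; congr (_ * _); lia.
  lia.
have := le_INR _ _ (leP hs').
rewrite INR_addn INR_muln sum_enum => h.
have hsum : (INR (sumn [seq #|Pat k (Uc U c)| | c <- enum 'I_d]) <=
     gsumR b [seq #|Uc U c| | c <- enum 'I_d])%R.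
  rewrite sumnE big_map; apply: INR_sum_le => c _; exact: IH.
have hI := IH (Ic U).
have hkey := @gsum_key b d (k-d+1) #|Ic U| [seq #|Uc U c| | c <- enum 'I_d] hb hD hd.
rewrite (card_split U) sum_enum.
have hDd : (0 <= INR (k - d + 1 - d))%R by apply: pos_INR.
have hp : (0 <= INR #|Pat k (Ic U)|)%R by apply: pos_INR.
apply: Rle_trans h _.
apply: Rle_trans (hkey _ _ _).
- apply: Rplus_le_compat => //; apply: Rmult_le_compat_l => //.
- lia.
- by rewrite size_map size_enum_ord.
- apply/allP => u /mapP [c _ ->]; apply: subset_leq_card; exact: bigcap_inf.
Qed.

End MLemB.
Import MLemB.

Module MUpper.
#[local] Set Implicit Arguments.
#[local] Unset Strict Implicit.
#[local] Unset Printing Implicit Defensive.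

Section Upper.
Variables (k d n m1 m2 : nat).
Variable E : 'I_m1 -> 'I_m2 -> word 'I_k n.
Hypothesis hE : forall (a1 a1' : 'I_m1) (a2 a2' : 'I_m2),
      (a1 <> a1' -> distinguishable (G1_graph k d) (E a1 a2) (E a1' a2')) /\
      (a2 <> a2' -> distinguishable (G2_graph k d) (E a1 a2) (E a1' a2')).

Definition X a1 a2 : {ffun 'I_n -> 'I_k} := finfun (E a1 a2).
Definition Uset a1 : {set {ffun 'I_n -> 'I_d}} := [set z | [exists a2, agree (X a1 a2) z]].

Lemma pat_inj a1 : injective (fun a2 => pat d (X a1 a2)).
Proof.
move=> a2 a2' hp; apply/eqP; apply/negPn/negP => /eqP hne.
have [t [hneq hG]] := (hE a1 a1 a2 a2').2 hne.
move/ffunP: hp => /(_ t); rewrite !ffunE.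
move: hG; rewrite /G2_graph hneq /=.
case: ltnP => h1; case: ltnP => h2 //=.
by move=> _ [] /eqP; rewrite (negbTE hneq).
Qed.

Lemma m2_le a1 : m2 <= #|Pat k (Uset a1)|.
Proof.
rewrite -{1}(card_ord m2) -(card_imset _ (@pat_inj a1)).
apply: subset_leq_card; apply/subsetP => p /imsetP [a2 _ ->]; apply/PatP.
exists (X a1 a2); split => //; apply/forallP => z; apply/implyP => hz.
by rewrite inE; apply/existsP; exists a2.
Qed.

Lemma disj a a' z : z \in Uset a -> z \in Uset a' -> a = a'.
Proof.
rewrite !inE => /existsP [a2 /forallP h] /existsP [a2' /forallP h'].
apply/eqP; apply/negPn/negP => /eqP hne.
have [t [hneq hG]] := (hE a a' a2 a2').1 hne.
move: hG; rewrite /G1_graph hneq /= negb_or -!ltnNge => /andP [h1 h2].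
move/implyP: (h t); rewrite /X ffunE => /(_ h1) /eqP e1.
move/implyP: (h' t); rewrite /X ffunE => /(_ h2) /eqP e2.
by move: hneq; rewrite -val_eqE -e1 -e2 eqxx.
Qed.

Lemma sumU : \sum_(a : 'I_m1) #|Uset a| <= expn d n.
Proof.
rewrite (eq_bigr (fun a => \sum_z ((z \in Uset a) : nat))); last by move=> a _; rewrite card_sumb.
rewrite exchange_big /=.
have -> : expn d n = \sum_(z : {ffun 'I_n -> 'I_d}) 1 by rewrite sum1_card card_ffun !card_ord.
apply: leq_sum => z _.
have -> : \sum_a ((z \in Uset a) : nat) = #|[set a | z \in Uset a]|.
  by rewrite card_sumb; apply: eq_bigr => a _; rewrite inE.
apply/card_le1P => a; rewrite inE => ha b; rewrite inE /=.
apply/idP/eqP => [hb|->] //; exact: disj hb ha.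
Qed.
End Upper.

Local Open Scope R_scope.

Lemma expn_pow (a b : nat) : expn a b = Nat.pow a b.
Proof. elim: b => //= b IH. by rewrite expnS IH. Qed.

Lemma ln_le' x y : 0 < x -> x <= y -> ln x <= ln y.
Proof. move=> hx [h|->]; [left; exact: ln_increasing | right]. done. Qed.

Lemma ln_pos' x : 1 < x -> 0 < ln x.
Proof. move=> h; rewrite -ln_1; apply: ln_increasing => //; lra. Qed.

Lemma sum_lower (m : nat) (f : 'I_m -> nat) c :
  (forall a, c <= INR (f a)) -> INR m * c <= INR (\sum_(a : 'I_m) f a).
Proof.
move=> hf; rewrite -big_enum -{1}(size_enum_ord m).
elim: (enum 'I_m) => [|a r IH]; first by rewrite big_nil /=; lra.
rewrite big_cons INR_addn (_ : size (a :: r) = (size r).+1) // S_INR. have := hf a. lra.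
Qed.

Lemma ULB k d n m1 m2 : (2 <= d)%nat -> (2*d <= k+1)%nat ->
  feasible_vec (G1_graph k d) (G2_graph k d) n m1 m2 ->
  ln (INR m1) / ln (INR d) + ln (INR m2) / ln (INR (k-d+1)) <= INR n.
Proof.
move=> hd hdk [hm1 [hm2 [E hE]]].
have hd2 : 2 <= INR d by rewrite -[2]/(INR 2); apply: le_INR; apply/leP.
have hdD : (d <= k - d + 1)%nat by lia.
have hDR : INR d <= INR (k-d+1) by apply: le_INR; apply/leP.
have lnd : 0 < ln (INR d) by apply: ln_pos'; lra.
have lnD : ln (INR d) <= ln (INR (k-d+1)) by apply: ln_le'; lra.
pose b := ln (INR (k-d+1)) / ln (INR d).
have hb : 1 <= b.
  rewrite /b; apply: (Rmult_le_reg_r (ln (INR d))) => //.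
  rewrite Rmult_1_l /Rdiv Rmult_assoc Rinv_l; lra.
have hbD : Rpower (INR d) b = INR (k-d+1).
  rewrite /Rpower /b /Rdiv Rmult_assoc Rinv_l; last lra.
  rewrite Rmult_1_r exp_ln //; lra.
have hd0 : (0 < d)%nat by lia.
have hm2R : 1 <= INR m2 by rewrite -[1]/(INR 1); apply: le_INR; apply/leP.
pose c := Rpower (INR m2) (/ b).
have hc : forall a, c <= INR #|Uset d E a|.
  move=> a.
  have h1 := lemB hb hbD hd0 hdk (Uset d E a).
  have h2 : INR m2 <= INR #|Pat k (Uset d E a)| by apply: le_INR; apply/leP; exact: (@m2_le k d n m1 m2 E hE a).
  move: h1; case hu: #|Uset d E a| => [|u] h1.
    rewrite [gR _ 0]/= in h1; lra.
  rewrite gR_pos // in h1.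
  have h3 : INR m2 <= Rpower (INR u.+1) b by lra.
  rewrite /c -(Rpower_1 (INR u.+1)); last exact: INR_pos.
  have -> : 1 = b * / b by field; lra.
  rewrite -Rpower_mult; apply: Rle_Rpower_l.
    left; apply: Rinv_0_lt_compat; lra.
  lra.
have hsum := sum_lower hc.
have hsU : INR (\sum_(a : 'I_m1) #|Uset d E a|) <= INR d ^ n.
  rewrite -pow_INR -expn_pow; apply: le_INR; apply/leP.
  exact: (@sumU k d n m1 m2 E hE).
have hm1R : 1 <= INR m1 by rewrite -[1]/(INR 1); apply: le_INR; apply/leP.
have hcpos : 0 < c by apply: Rpower_pos.
have hpos : 0 < INR m1 * c by apply: Rmult_lt_0_compat; lra.
have := ln_le' hpos (Rle_trans _ _ _ hsum hsU).
rewrite ln_mult ?ln_Rpower ?ln_pow; try lra.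
have lnDp : 0 < ln (INR (k - d + 1)) by lra.
have -> : / b = ln (INR d) / ln (INR (k-d+1)) by rewrite /b; field; lra.
move=> h.
have e : ln (INR m1) / ln (INR d) + ln (INR m2) / ln (INR (k - d + 1)) =
  (ln (INR m1) + ln (INR d) / ln (INR (k - d + 1)) * ln (INR m2)) / ln (INR d) by field; lra.
rewrite e; apply: (Rmult_le_reg_r (ln (INR d))) => //.
rewrite /Rdiv Rmult_assoc Rinv_l; lra.
Qed.

End MUpper.
Import MUpper.

Module MMain1.
Local Open Scope R_scope.

Lemma cv_const c : Un_cv (fun _ => c) c.
Proof. move=> eps he; exists 0%nat => n _; rewrite /R_dist Rminus_diag Rabs_R0; lra. Qed.

Lemma cv_div u l c : Un_cv u l -> Un_cv (fun n => u n / c) (l / c).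
Proof. move=> h; exact: (CV_mult _ _ _ _ h (cv_const (/ c))). Qed.

Lemma lim_le u l C : Un_cv u l -> (forall n, (1 <= n)%nat -> u n <= C) -> l <= C.
Proof.
move=> hu hb; apply: Rnot_lt_le => hlt.
have [N hN] := hu (l - C) ltac:(lra).
have := hN (maxn N 1) ltac:(apply/leP; exact: leq_maxl).
have := hb (maxn N 1) ltac:(exact: leq_maxr).
rewrite /R_dist => h1 /Rabs_def2 [h2 h3]. lra.
Qed.

Lemma cv_rate u l C : 0 <= C -> (forall n, (1 <= n)%nat -> Rabs (u n - l) <= C / INR n) -> Un_cv u l.
Proof.
move=> hC hb eps he.
have [N [hN hN0]] := archimed_cor1 (eps / (C + 1)) ltac:(apply: Rdiv_lt_0_compat; lra).
exists N => n hn; rewrite /R_dist.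
have hn1 : (1 <= n)%nat by lia.
apply: Rle_lt_trans (hb n hn1) _.
have hINn : INR N <= INR n by apply: le_INR.
have hN0' : 0 < INR N by apply: lt_0_INR; lia.
have hn0 : 0 < INR n by lra.
have h1 : C / INR n <= C / INR N.
  apply: Rmult_le_compat_l => //; apply: Rinv_le_contravar => //.
apply: Rle_lt_trans h1 _.
have h2 : C / INR N = C * / INR N by [].
rewrite h2.
have hi : 0 < / INR N by apply: Rinv_0_lt_compat.
have : / INR N * (C + 1) < eps.
  have := Rmult_lt_compat_r (C+1) _ _ ltac:(lra) hN.
  rewrite /Rdiv Rmult_assoc Rinv_l; lra.
nra.
Qed.

Definition fl (alpha : R) (n : nat) : nat := Z.to_nat (Int_part (alpha * INR n)).

Lemma fl_spec alpha n : 0 <= alpha <= 1 ->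
  INR (fl alpha n) <= alpha * INR n /\ alpha * INR n - 1 < INR (fl alpha n) /\ (fl alpha n <= n)%nat.
Proof.
move=> ha.
have hn := pos_INR n.
have [h1 h2] := base_Int_part (alpha * INR n).
have hr : 0 <= alpha * INR n by apply: Rmult_le_pos; lra.
have hz : (0 <= Int_part (alpha * INR n))%Z.
  have : (-1 < Int_part (alpha * INR n))%Z by apply: lt_IZR; lra.
  lia.
have hI : INR (fl alpha n) = IZR (Int_part (alpha * INR n)).
  by rewrite /fl INR_IZR_INZ Znat.Z2Nat.id.
rewrite hI; split; first done; split; first lra.
apply/leP; apply: INR_le; rewrite hI.
have : alpha * INR n <= INR n by nra.
lra.
Qed.

Lemma cv_fl_gen alpha L (f : nat -> R) : 0 <= alpha <= 1 ->
  (forall n, (1 <= n)%nat -> f n * INR n = L * (INR (fl alpha n) - alpha * INR n)) ->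
  Un_cv f 0.
Proof.
move=> ha hf; apply: (@cv_rate f 0 (Rabs L)); first exact: Rabs_pos.
move=> n hn.
have hn0 : 0 < INR n by apply: lt_0_INR; apply/ltP.
have [h1 [h2 _]] := @fl_spec alpha n ha.
have e : f n = L * (INR (fl alpha n) - alpha * INR n) / INR n.
  rewrite -hf //; field; lra.
rewrite Rminus_0_r e /Rdiv Rabs_mult Rabs_inv (Rabs_right (INR n)); last lra.
rewrite Rabs_mult.
apply: Rmult_le_compat_r; first by left; apply: Rinv_0_lt_compat.
have : Rabs (INR (fl alpha n) - alpha * INR n) <= 1 by apply: Rabs_le; lra.
have := Rabs_pos L. nra.
Qed.

Lemma cv_shift u l : Un_cv (fun n => u n - l) 0 -> Un_cv u l.
Proof.
move=> h eps he; have [N hN] := h eps he; exists N => n hn.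
have := hN n hn; rewrite /R_dist Rminus_0_r //.
Qed.

End MMain1.
Import MMain1.

Module MCons.
#[local] Set Implicit Arguments.
#[local] Unset Strict Implicit.
#[local] Unset Printing Implicit Defensive.

Section Cons.
Variables k d : nat.
Hypothesis hd : 2 <= d.
Hypothesis hdk : 2 * d <= k + 1.

Let hdk' : d <= k. Proof. lia. Qed.

Lemma L2_proof (j : 'I_(k-d+1)) : (if val j == 0 then 0 else val j + d - 1) < k.
Proof. have := ltn_ord j; case: eqP => _ /=; lia. Qed.

Definition L2 (j : 'I_(k-d+1)) : 'I_k := Ordinal (L2_proof j).
Definition L1 (i : 'I_d) : 'I_k := widen_ord hdk' i.

Lemma L2_inj : injective L2.
Proof.
move=> j j' /(congr1 val) /=; case: eqP => h1; case: eqP => h2 => e; apply: val_inj => /=; lia.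
Qed.

Lemma L2_lt (j : 'I_(k-d+1)) : (L2 j < d) = (val j == 0).
Proof. rewrite /L2 /=; case: eqP => h /=; lia. Qed.

Lemma ffun_neq (A B : finType) (f g : {ffun A -> B}) : f <> g -> exists a, f a != g a.
Proof.
move=> hne; case: (boolP [exists a, f a != g a]) => [/existsP //|/existsPn h].
exfalso; apply: hne; apply/ffunP => a; move: (h a); by rewrite negbK => /eqP.
Qed.

Lemma feas_cons n n1 n2 (hn : n = n1 + n2) :
  feasible_vec (G1_graph k d) (G2_graph k d) n #|{ffun 'I_n1 -> 'I_d}| #|{ffun 'I_n2 -> 'I_(k-d+1)}|.
Proof.
split; first by rewrite card_ffun !card_ord expn_gt0; apply/orP; left; lia.
split; first by rewrite card_ffun !card_ord expn_gt0; apply/orP; left; lia.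
pose E := fun (a1 : 'I_#|{ffun 'I_n1 -> 'I_d}|) (a2 : 'I_#|{ffun 'I_n2 -> 'I_(k-d+1)}|) (t : 'I_n) =>
  match fintype.split (cast_ord hn t) with
  | inl i => L1 (enum_val a1 i)
  | inr j => L2 (enum_val a2 j)
  end.
exists E => a1 a1' a2 a2'; split => hne.
- have hne' : enum_val a1 <> enum_val a1' by move/enum_val_inj.
  have [i hi] := ffun_neq hne'.
  exists (cast_ord (esym hn) (lshift n2 i)).
  rewrite /E cast_ordKV (_ : lshift n2 i = unsplit (inl i)) // unsplitK.
  have hne2 : L1 (enum_val a1 i) != L1 (enum_val a1' i).
    by apply: contra hi => /eqP /(congr1 val) /= h; apply/eqP/val_inj.
  rewrite hne2; split => //.
  by rewrite /G1_graph hne2 /= /L1 /= leqNgt ltn_ord leqNgt ltn_ord.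
- have hne' : enum_val a2 <> enum_val a2' by move/enum_val_inj.
  have [j hj] := ffun_neq hne'.
  exists (cast_ord (esym hn) (rshift n1 j)).
  rewrite /E cast_ordKV (_ : rshift n1 j = unsplit (inr j)) // unsplitK.
  have hne2 : L2 (enum_val a2 j) != L2 (enum_val a2' j).
    by apply: contra hj => /eqP /L2_inj ->.
  rewrite hne2; split => //.
  rewrite /G2_graph hne2 /= !L2_lt.
  apply/negP => /andP [/eqP h1 /eqP h2]; move: hj; apply/negP; rewrite negbK.
  by apply/eqP/val_inj; rewrite h1 h2.
Qed.
End Cons.

End MCons.
Import MCons.


Lemma log2_ln x y : ln 2 <> 0%R -> (log2 x / log2 y = ln x / ln y)%R.
Proof.
move=> h; rewrite /log2.
case: (Req_dec (ln y) 0) => hy.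
  by rewrite hy /Rdiv Rmult_0_l Rinv_0 !Rmult_0_r.
field; split => //.
Qed.

Lemma rate_bound k d R1 R2 : (2 <= d)%N -> (2 * d <= k + 1)%N ->
  feasible_rate (G1_graph k d) (G2_graph k d) R1 R2 ->
  (R1 / log2 (INR d) + R2 / log2 (INR (k - d + 1)) <= 1)%R.
Proof.
move=> hd hdk [m1 [m2 [hf [h1 h2]]]].
have ln2 : (0 < ln 2)%R by apply: ln_pos'; lra.
apply: (lim_le _ _ _ (CV_plus _ _ _ _ (cv_div _ _ (log2 (INR d)) h1) (cv_div _ _ (log2 (INR (k-d+1))) h2))).
move=> n hn.
have hn0 : (0 < INR n)%R by apply: lt_0_INR; apply/ltP.
have := ULB hd hdk (hf n).
have e1 : (log2 (INR (m1 n)) / INR n / log2 (INR d) = (ln (INR (m1 n)) / ln (INR d)) / INR n)%R.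
  rewrite /Rdiv Rmult_assoc (Rmult_comm (/ INR n)) -Rmult_assoc.
  rewrite -/(Rdiv (log2 (INR (m1 n))) (log2 (INR d))) log2_ln; lra.
have e2 : (log2 (INR (m2 n)) / INR n / log2 (INR (k-d+1)) = (ln (INR (m2 n)) / ln (INR (k-d+1))) / INR n)%R.
  rewrite /Rdiv Rmult_assoc (Rmult_comm (/ INR n)) -Rmult_assoc.
  rewrite -/(Rdiv (log2 (INR (m2 n))) (log2 (INR (k-d+1)))) log2_ln; lra.
rewrite e1 e2 => h.
apply: (Rmult_le_reg_r (INR n)) => //.
have -> : ((ln (INR (m1 n)) / ln (INR d) / INR n + ln (INR (m2 n)) / ln (INR (k - d + 1)) / INR n) * INR n
  = ln (INR (m1 n)) / ln (INR d) + ln (INR (m2 n)) / ln (INR (k - d + 1)))%R.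
  rewrite Rmult_plus_distr_r /Rdiv !Rmult_assoc Rinv_l; last lra.
  by rewrite !Rmult_1_r.
lra.
Qed.

Theorem theorem8 (d k : nat) :
  (2 <= d)%N -> (2 * d <= k + 1)%N ->
  forall alpha : R, (0 <= alpha <= 1)%R ->
  optimal_rate (G1_graph k d) (G2_graph k d)
    (alpha * log2 (INR d))%R ((1 - alpha) * log2 (INR (k - d + 1)))%R.
Proof.
move=> hd hdk alpha ha.
have ln2 : (0 < ln 2)%R by apply: ln_pos'; lra.
have hd2 : (2 <= INR d)%R by rewrite -[2%R]/(INR 2); apply: le_INR; apply/leP.
have hD2 : (2 <= INR (k - d + 1))%R by rewrite -[2%R]/(INR 2); apply: le_INR; apply/leP; lia.
have ld : (0 < log2 (INR d))%R.
  rewrite /log2; apply: Rdiv_lt_0_compat => //; apply: ln_pos'; lra.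
have lD : (0 < log2 (INR (k - d + 1)))%R.
  rewrite /log2; apply: Rdiv_lt_0_compat => //; apply: ln_pos'; lra.
split; [|split].
- exists (fun n => #|{ffun 'I_(fl alpha n) -> 'I_d}|),
         (fun n => #|{ffun 'I_(n - fl alpha n) -> 'I_(k - d + 1)}|).
  split; [|split].
  + move=> n; apply: feas_cons => //.
    have [_ [_ h]] := @fl_spec alpha n ha.
    by rewrite subnKC.
  + apply: cv_shift; apply: (cv_fl_gen alpha (log2 (INR d))) => // n hn.
    have hn0 : (0 < INR n)%R by apply: lt_0_INR; apply/ltP.
    rewrite card_ffun !card_ord expn_pow pow_INR /log2 ln_pow; last lra.
    field; lra.
  + apply: cv_shift; apply: (cv_fl_gen alpha (- log2 (INR (k - d + 1)))) => // n hn.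
    have hn0 : (0 < INR n)%R by apply: lt_0_INR; apply/ltP.
    have [_ [_ hfl]] := @fl_spec alpha n ha.
    rewrite card_ffun !card_ord expn_pow pow_INR /log2 ln_pow; last lra.
    rewrite INR_subn //.
    field; lra.
- move=> R1' hlt hf.
  have := rate_bound _ _ _ _ hd hdk hf.
  have -> : ((1 - alpha) * log2 (INR (k - d + 1)) / log2 (INR (k - d + 1)) = 1 - alpha)%R by field; lra.
  have : (alpha < R1' / log2 (INR d))%R.
    apply: (Rmult_lt_reg_r (log2 (INR d))) => //.
    rewrite /Rdiv Rmult_assoc Rinv_l; lra.
  lra.
- move=> R2' hlt hf.
  have := rate_bound _ _ _ _ hd hdk hf.
  have -> : (alpha * log2 (INR d) / log2 (INR d) = alpha)%R by field; lra.
  have : (1 - alpha < R2' / log2 (INR (k - d + 1)))%R.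
    apply: (Rmult_lt_reg_r (log2 (INR (k - d + 1)))) => //.
    rewrite /Rdiv Rmult_assoc Rinv_l; lra.
  lra.
Qed.
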